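(* If a wave $(u,v,P,\eta,d)\in\mathcal W$ satisfies $u_x<0$ in $\Omega^+\cup S^+$, then $\max_{\overline\Omega}|v/u|<1$.
   Context: Fix constants $g>0$, $L>0$ and $P_{\mathrm{atm}}\in\mathbb R$. A wave is a 5-tuple $(u,v,P,\eta,d)$ with $d>0$, $\eta\in C^4$ $2L$-periodic with mean zero, and $u,v,P\in C^3(\overline\Omega)$ $2L$-periodic in $x$, where $\Omega=\{(x,y): -L<x<L,\ -d<y<\eta(x)\}$ (extended periodically), with $u,P,\eta$ even in $x$ and $v$ odd in $x$, satisfying $uu_x+vu_y=-P_x$, $uv_x+vv_y=-P_y-g$, $u_x+v_y=0$ in $\{-d<y<\eta(x)\}$; $P=P_{\mathrm{atm}}$ and $v=\eta_x u$ on $y=\eta(x)$; $v=0$ on $y=-d$. It is assumed that $\sup_\Omega u<0$. Then there is a stream function $\psi$ with $\psi_y=u$, $\psi_x=-v$, $\psi=0$ on the free surface and $\psi=m>0$ on $y=-d$, and a vorticity function $\gamma\in C^2[0,m]$ with $v_x-u_y=\gamma(\psi)$; it is assumed that $\gamma\le0$, $\gamma'\le0$, $\gamma''\le0$ on $(0,m)$. A wave is trivial if $u,v,\eta,P$ depend only on $y$. Let $\Omega^+=\{0<x<L,\ -d<y<\eta(x)\}$, $S^+=\{(x,\eta(x)):0<x<L\}$. A wave is monotone if $v>0$ in $\Omega^+\cup S^+$. $\mathcal W$ is the set of all such waves that are either monotone or trivial. *)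

(* Defs.v *)
From Stdlib Require Import Reals.
From Coquelicot Require Import Coquelicot.
Open Scope R_scope.

Definition dom (eta : R -> R) (d : R) (x y : R) : Prop := -d < y < eta x.
Definition domc (eta : R -> R) (d : R) (x y : R) : Prop := -d <= y <= eta x.

Definition cont_on2 (S : R -> R -> Prop) (f : R -> R -> R) : Prop :=
  forall x y, S x y -> forall eps, 0 < eps -> exists delta, 0 < delta /\
    forall x' y', S x' y' -> Rabs (x' - x) < delta -> Rabs (y' - y) < delta ->
      Rabs (f x' y' - f x y) < eps.

Definition px (f : R -> R -> R) (x y : R) : R := Derive (fun t => f t y) x.
Definition py (f : R -> R -> R) (x y : R) : R := Derive (fun t => f x t) y.

(* f in C^n(closure of D): f continuous on the closure Dc, partial derivatives
   exist in the open set D and extend (together with their own derivatives up to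
   order n) continuously to Dc. *)
Fixpoint Ck_cl (n : nat) (D Dc : R -> R -> Prop) (f : R -> R -> R) : Prop :=
  cont_on2 Dc f /\
  match n with
  | O => True
  | S m =>
      (forall x y, D x y -> ex_derive (fun t => f t y) x /\ ex_derive (fun t => f x t) y) /\
      exists fx fy : R -> R -> R,
        (forall x y, D x y -> fx x y = px f x y /\ fy x y = py f x y) /\
        Ck_cl m D Dc fx /\ Ck_cl m D Dc fy
  end.

Definition cont_on1 (S : R -> Prop) (f : R -> R) : Prop :=
  forall s, S s -> forall eps, 0 < eps -> exists delta, 0 < delta /\
    forall t, S t -> Rabs (t - s) < delta -> Rabs (f t - f s) < eps.

Fixpoint Ck_int (n : nat) (a b : R) (f : R -> R) : Prop :=
  cont_on1 (fun s => a <= s <= b) f /\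
  match n with
  | O => True
  | S m =>
      (forall s, a < s < b -> ex_derive f s) /\
      exists g : R -> R, (forall s, a < s < b -> g s = Derive f s) /\ Ck_int m a b g
  end.

Definition Ck_R (n : nat) (f : R -> R) : Prop :=
  forall k, (k <= n)%nat -> forall x, ex_derive_n f k x /\ continuous (Derive_n f k) x.

(* A wave (u,v,P,eta,d) with the standing assumptions (sup u < 0 and the
   vorticity-function assumptions). *)
Definition is_wave (g L Patm : R) (u v P : R -> R -> R) (eta : R -> R) (d : R) : Prop :=
  0 < d /\
  (forall x, -d < eta x) /\
  Ck_R 4 eta /\
  (forall x, eta (x + 2 * L) = eta x) /\
  RInt eta (- L) L = 0 /\
  (forall x, eta (- x) = eta x) /\
  Ck_cl 3 (dom eta d) (domc eta d) u /\
  Ck_cl 3 (dom eta d) (domc eta d) v /\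
  Ck_cl 3 (dom eta d) (domc eta d) P /\
  (forall x y, domc eta d x y ->
     u (x + 2 * L) y = u x y /\ v (x + 2 * L) y = v x y /\ P (x + 2 * L) y = P x y) /\
  (forall x y, domc eta d x y ->
     u (- x) y = u x y /\ P (- x) y = P x y /\ v (- x) y = - v x y) /\
  (forall x y, dom eta d x y ->
     u x y * px u x y + v x y * py u x y = - px P x y /\
     u x y * px v x y + v x y * py v x y = - py P x y - g /\
     px u x y + py v x y = 0) /\
  (forall x, P x (eta x) = Patm /\ v x (eta x) = Derive eta x * u x (eta x)) /\
  (forall x, v x (- d) = 0) /\
  (exists c, c < 0 /\ forall x y, dom eta d x y -> u x y <= c) /\
  (exists (psi : R -> R -> R) (m : R) (gam : R -> R),
     0 < m /\
     cont_on2 (domc eta d) psi /\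
     (forall x y, dom eta d x y ->
        is_derive (fun t => psi x t) y (u x y) /\
        is_derive (fun t => psi t y) x (- v x y)) /\
     (forall x, psi x (eta x) = 0 /\ psi x (- d) = m) /\
     Ck_int 2 0 m gam /\
     (forall x y, dom eta d x y -> px v x y - py u x y = gam (psi x y)) /\
     (forall s, 0 < s < m ->
        gam s <= 0 /\ Derive gam s <= 0 /\ Derive (Derive gam) s <= 0)).

(* Monotone: v > 0 in Omega^+ union S^+. *)
Definition monotone_wave (L : R) (v : R -> R -> R) (eta : R -> R) (d : R) : Prop :=
  forall x y, 0 < x < L -> -d < y <= eta x -> 0 < v x y.

Definition trivial_wave (u v P : R -> R -> R) (eta : R -> R) (d : R) : Prop :=
  (forall x1 x2, eta x1 = eta x2) /\
  (forall x1 x2 y, domc eta d x1 y -> domc eta d x2 y ->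
     u x1 y = u x2 y /\ v x1 y = v x2 y /\ P x1 y = P x2 y).

Definition in_W (g L Patm : R) (u v P : R -> R -> R) (eta : R -> R) (d : R) : Prop :=
  is_wave g L Patm u v P eta d /\ (monotone_wave L v eta d \/ trivial_wave u v P eta d).

(* Main.v *)
Require Import Defs.
From Stdlib Require Import Reals Lra Psatz.
From Coquelicot Require Import Coquelicot.
From mathcomp Require all_boot all_order all_algebra all_classical all_reals all_analysis Rstruct Rstruct_topology.

Module EVTm.
Import all_boot all_order all_algebra all_classical all_reals all_analysis Rstruct Rstruct_topology.
Import Order.TTheory GRing.Theory Num.Theory.
Import numFieldNormedType.Exports.
Local Open Scope classical_set_scope.
Local Open Scope R_scope.
Lemma evt_rect (a b c e : R) (H : R -> R -> R) : a <= b -> c <= e ->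
 (forall x t, a<=x<=b -> c<=t<=e -> forall eps, 0<eps -> exists del, 0<del /\
   forall x' t', a<=x'<=b -> c<=t'<=e -> Rabs(x'-x)<del -> Rabs(t'-t)<del ->
     Rabs(H x' t' - H x t) < eps) ->
 exists x0 t0, a<=x0<=b /\ c<=t0<=e /\ forall x t, a<=x<=b -> c<=t<=e -> H x t <= H x0 t0.
Proof.
move=> ab ce hc.
pose A := (`[a, b] `*` `[c, e])%classic : set (R * R).
have inA : forall p : R * R, A p <-> (a <= p.1 <= b) /\ (c <= p.2 <= e).
  move=> [x t]; rewrite /A /= !in_itv /=; split.
    by move=> [/andP [/RleP ? /RleP ?] /andP [/RleP ? /RleP ?]].
  by move=> [[? ?] [? ?]]; split; apply/andP; split; apply/RleP.
have cA : compact A by apply: compact_setX; apply: segment_compact.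
have A0 : (A !=set0)%classic.
  by exists (a, c); apply/inA => /=; lra.
have cf : {within A, continuous (fun p : R * R => H p.1 p.2)}.
  apply/subspace_continuousP => -[x t] /inA /= [hx ht].
  rewrite /from_subspace /=. apply: (proj2 (@cvgrPdist_lt _ R^o _ _ _ _ _)) => eps /RltP eps0.
  have [del [del0 hd]] := hc x t hx ht eps eps0.
  rewrite /within; apply/nbhs_ballP; exists del => /=; first by apply/RltP.
  move=> [x' t'] [/= b1 b2] /inA /= [hx' ht'].
  have b1' : Rabs (x - x') < del by apply/RltP; exact: b1.
  have b2' : Rabs (t - t') < del by apply/RltP; exact: b2.
  apply/RltP; change (Rabs (H x t - H x' t') < eps).
  rewrite -Rabs_Ropp Ropp_minus_distr.
  apply: hd => //; first by rewrite -Rabs_Ropp Ropp_minus_distr.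
  by rewrite -Rabs_Ropp Ropp_minus_distr.
have [p0 Ap0 M] := compact_EVT_max A0 cA cf.
move: Ap0; rewrite inE => /inA [h1 h2].
exists p0.1, p0.2; split => //; split => // x t hx ht.
by apply/RleP; apply: (M (x, t)); rewrite inE; apply/inA.
Qed.
End EVTm.
Open Scope R_scope.

Definition clamp (a b t : R) := Rmax a (Rmin b t).

Lemma clamp_in a b t : a <= b -> a <= clamp a b t <= b.
Proof. intros; unfold clamp, Rmax, Rmin; repeat destruct Rle_dec; lra. Qed.

Lemma clamp_id a b t : a <= t <= b -> clamp a b t = t.
Proof. intros; unfold clamp, Rmax, Rmin; repeat destruct Rle_dec; lra. Qed.

Lemma clamp_lip a b t t' : a <= b -> Rabs (clamp a b t' - clamp a b t) <= Rabs (t' - t).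
Proof.
  intros; unfold clamp, Rmax, Rmin; repeat destruct Rle_dec;
  unfold Rabs; repeat destruct Rcase_abs; lra.
Qed.

Lemma MVT1 (f : R -> R) a b : a < b -> (forall t, a < t < b -> ex_derive f t) ->
  cont_on1 (fun s => a <= s <= b) f ->
  exists c, a < c < b /\ f b - f a = Derive f c * (b - a).
Proof.
  intros hab hd hc.
  set (g := fun t => f (clamp a b t)).
  assert (hgd : forall c, a < c < b -> derivable_pt_lim g c (Derive f c)).
  { intros c hc'. apply is_derive_Reals.
    apply is_derive_ext_loc with (f := f).
    - apply locally_interval with (a := Finite a) (b := Finite b); simpl; try lra.
      intros y h1 h2; unfold g; rewrite clamp_id; lra.
    - apply Derive_correct; auto. }
  assert (pr1 : forall c, a < c < b -> derivable_pt id c).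
  { intros; apply derivable_pt_id. }
  assert (pr2 : forall c, a < c < b -> derivable_pt g c).
  { intros c h. exists (Derive f c). apply hgd; auto. }
  assert (hcont : forall c, a <= c <= b -> continuity_pt g c).
  { intros c _. unfold continuity_pt, continue_in, limit1_in, limit_in. simpl.
    unfold R_dist. intros eps heps.
    destruct (hc (clamp a b c) (clamp_in a b c (Rlt_le _ _ hab)) eps heps) as [del [hdel H]].
    exists del; split; auto. intros x [_ hx]. unfold g. apply H.
    - apply clamp_in; lra.
    - eapply Rle_lt_trans; [apply clamp_lip; lra| auto]. }
  assert (hid : forall c, a <= c <= b -> continuity_pt id c).
  { intros; apply derivable_continuous_pt, derivable_pt_id. }
  destruct (MVT id g a b pr1 pr2 hab hid hcont) as [c [P H]].
  exists c; split; auto.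
  rewrite (derive_pt_eq_0 g c (Derive f c) (pr2 c P) (hgd c P)) in H.
  rewrite (derive_pt_eq_0 id c 1 (pr1 c P) (derivable_pt_lim_id c)) in H. unfold id in H. unfold g in H.
  rewrite !clamp_id in H by lra. lra.
Qed.

Lemma local_max_deriv (g : R -> R) x l : derivable_pt_lim g x l ->
  (exists del, 0 < del /\ forall t, Rabs (t - x) < del -> g t <= g x) -> l = 0.
Proof.
  intros hd [del [hdel hm]].
  destruct (Rtotal_order l 0) as [hl|[hl|hl]]; auto; exfalso.
  - destruct (hd (- l / 2)) as [e he]; [lra|].
    set (h := - Rmin (e/2) (del/2)).
    assert (hh : h < 0) by (unfold h, Rmin; destruct Rle_dec; destruct e; simpl in *; lra).
    assert (hh2 : Rabs h < e /\ Rabs h < del).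
    { unfold h, Rmin; destruct Rle_dec; destruct e; simpl in *; rewrite Rabs_left; lra. }
    specialize (he h (Rlt_not_eq _ _ hh) (proj1 hh2)).
    specialize (hm (x + h)). replace (x + h - x) with h in hm by ring.
    specialize (hm (proj2 hh2)).
    assert (hq : (g (x + h) - g x) / h >= 0).
    { assert (hi : / h < 0) by (apply Rinv_lt_0_compat; lra). unfold Rdiv; nra. }
    apply Rabs_def2 in he; lra.
  - destruct (hd (l / 2)) as [e he]; [lra|].
    set (h := Rmin (e/2) (del/2)).
    assert (hh : 0 < h) by (unfold h, Rmin; destruct Rle_dec; destruct e; simpl in *; lra).
    assert (hh2 : Rabs h < e /\ Rabs h < del).
    { unfold h, Rmin; destruct Rle_dec; destruct e; simpl in *; rewrite Rabs_right; lra. }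
    specialize (he h (Rgt_not_eq _ _ hh) (proj1 hh2)).
    specialize (hm (x + h)). replace (x + h - x) with h in hm by ring.
    specialize (hm (proj2 hh2)).
    assert (hq : (g (x + h) - g x) / h <= 0).
    { assert (hi : / h > 0) by (apply Rinv_0_lt_compat; lra). unfold Rdiv; nra. }
    apply Rabs_def2 in he; lra.
Qed.
Lemma cont2_const S (k : R) : cont_on2 S (fun _ _ => k).
Proof. intros x y _ eps he; exists 1; split; [lra|]; intros; unfold Rminus; rewrite Rplus_opp_r, Rabs_R0; lra. Qed.

Lemma cont2_plus S f g : cont_on2 S f -> cont_on2 S g -> cont_on2 S (fun x y => f x y + g x y).
Proof.
  intros hf hg x y hs eps he.
  destruct (hf x y hs (eps/2)) as [d1 [h1 H1]]; [lra|].
  destruct (hg x y hs (eps/2)) as [d2 [h2 H2]]; [lra|].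
  exists (Rmin d1 d2); split; [apply Rmin_glb_lt; auto|].
  intros x' y' hs' hx hy.
  specialize (H1 x' y' hs' (Rlt_le_trans _ _ _ hx (Rmin_l _ _)) (Rlt_le_trans _ _ _ hy (Rmin_l _ _))).
  specialize (H2 x' y' hs' (Rlt_le_trans _ _ _ hx (Rmin_r _ _)) (Rlt_le_trans _ _ _ hy (Rmin_r _ _))).
  replace (f x' y' + g x' y' - (f x y + g x y)) with ((f x' y' - f x y) + (g x' y' - g x y)) by ring.
  eapply Rle_lt_trans; [apply Rabs_triang|]. lra.
Qed.

Lemma cont2_opp S f : cont_on2 S f -> cont_on2 S (fun x y => - f x y).
Proof.
  intros hf x y hs eps he. destruct (hf x y hs eps he) as [d1 [h1 H1]].
  exists d1; split; auto; intros. replace (- f x' y' - - f x y) with (- (f x' y' - f x y)) by ring.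
  rewrite Rabs_Ropp; auto.
Qed.

Lemma cont2_abs S f : cont_on2 S f -> cont_on2 S (fun x y => Rabs (f x y)).
Proof.
  intros hf x y hs eps he. destruct (hf x y hs eps he) as [d1 [h1 H1]].
  exists d1; split; auto; intros. eapply Rle_lt_trans; [apply Rabs_triang_inv2|]. auto.
Qed.

Lemma cont2_mult S f g : cont_on2 S f -> cont_on2 S g -> cont_on2 S (fun x y => f x y * g x y).
Proof.
  intros hf hg x y hs eps he.
  set (A := Rabs (f x y)). set (B := Rabs (g x y)).
  assert (hA : 0 <= A) by apply Rabs_pos. assert (hB : 0 <= B) by apply Rabs_pos.
  set (e2 := Rmin 1 (eps / (2 * (A + 1)))).
  set (e1 := eps / (2 * (B + 2))).
  assert (he2 : 0 < e2 /\ e2 <= 1 /\ e2 * (A + 1) <= eps / 2).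
  { unfold e2. split; [apply Rmin_glb_lt; [lra|]; apply Rdiv_lt_0_compat; lra|].
    split; [apply Rmin_l|]. apply Rle_trans with (eps / (2 * (A + 1)) * (A + 1)).
    apply Rmult_le_compat_r; [lra| apply Rmin_r]. right; field; lra. }
  assert (he1 : 0 < e1 /\ e1 * (B + 2) = eps / 2).
  { unfold e1; split; [apply Rdiv_lt_0_compat; lra| field; lra]. }
  destruct (hf x y hs e1) as [d1 [h1 H1]]; [lra|].
  destruct (hg x y hs e2) as [d2 [h2 H2]]; [lra|].
  exists (Rmin d1 d2); split; [apply Rmin_glb_lt; auto|].
  intros x' y' hs' hx hy.
  specialize (H1 x' y' hs' (Rlt_le_trans _ _ _ hx (Rmin_l _ _)) (Rlt_le_trans _ _ _ hy (Rmin_l _ _))).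
  specialize (H2 x' y' hs' (Rlt_le_trans _ _ _ hx (Rmin_r _ _)) (Rlt_le_trans _ _ _ hy (Rmin_r _ _))).
  replace (f x' y' * g x' y' - f x y * g x y) with
    ((f x' y' - f x y) * g x' y' + f x y * (g x' y' - g x y)) by ring.
  eapply Rle_lt_trans; [apply Rabs_triang|]. rewrite !Rabs_mult.
  assert (hg' : Rabs (g x' y') <= B + 1).
  { replace (g x' y') with (g x y + (g x' y' - g x y)) by ring.
    eapply Rle_trans; [apply Rabs_triang|]. fold B; lra. }
  fold A.
  assert (Rabs (f x' y' - f x y) * Rabs (g x' y') <= e1 * (B + 1)).
  { apply Rmult_le_compat; try apply Rabs_pos; lra. }
  assert (A * Rabs (g x' y' - g x y) <= A * e2).
  { apply Rmult_le_compat_l; lra. }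
  nra.
Qed.

Lemma cont2_inv S g c : c < 0 -> (forall x y, S x y -> g x y <= c) -> cont_on2 S g ->
  cont_on2 S (fun x y => / g x y).
Proof.
  intros hc hb hg x y hs eps he.
  destruct (hg x y hs (eps * (c * c))) as [d1 [h1 H1]]; [apply Rmult_lt_0_compat; [lra|nra]|].
  exists d1; split; auto. intros x' y' hs' hx hy.
  specialize (H1 x' y' hs' hx hy).
  assert (g1 := hb x y hs). assert (g2 := hb x' y' hs').
  replace (/ g x' y' - / g x y) with ((g x y - g x' y') / (g x' y' * g x y)) by (field; lra).
  unfold Rdiv. rewrite Rabs_mult, Rabs_inv, Rabs_minus_sym.
  rewrite (Rabs_right (g x' y' * g x y)) by nra.
  apply Rmult_lt_reg_r with (g x' y' * g x y); [nra|].
  rewrite Rmult_assoc, Rinv_l by nra. rewrite Rmult_1_r.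
  assert (c * c <= g x' y' * g x y) by nra. nra.
Qed.

Definition Dc (eta : R -> R) d := domc eta d.

Lemma near_dom eta d x y del : domc eta d x y -> 0 < del -> -d < eta x ->
  exists y', dom eta d x y' /\ Rabs (y' - y) < del.
Proof.
  intros [h1 h2] hd he.
  set (W := eta x + d). set (mu := Rmin (del/2) (W/4)).
  assert (hmu : 0 < mu /\ mu <= del / 2 /\ mu <= W / 4).
  { unfold mu; split; [apply Rmin_glb_lt; unfold W; lra|]; split; [apply Rmin_l|apply Rmin_r]. }
  destruct (Rlt_le_dec y (-d + W/2)).
  - exists (y + mu); unfold dom, W in *; split; [lra|].
    replace (y + mu - y) with mu by ring. rewrite Rabs_right; lra.
  - exists (y - mu); unfold dom, W in *; split; [lra|].
    replace (y - mu - y) with (- mu) by ring. rewrite Rabs_Ropp, Rabs_right; lra.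
Qed.

Lemma ext_le eta d F K : (forall x, -d < eta x) -> cont_on2 (domc eta d) F ->
  (forall x y, dom eta d x y -> F x y <= K) -> forall x y, domc eta d x y -> F x y <= K.
Proof.
  intros he hF hO x y hD. destruct (Rle_lt_dec (F x y) K) as [h|h]; auto. exfalso.
  destruct (hF x y hD (F x y - K)) as [del [hdel H]]; [lra|].
  destruct (near_dom eta d x y del hD hdel (he x)) as [y' [hO' hy']].
  assert (hD' : domc eta d x y') by (unfold dom, domc in *; lra).
  specialize (H x y' hD'). replace (x - x) with 0 in H by ring. rewrite Rabs_R0 in H.
  specialize (H hdel hy'). specialize (hO x y' hO'). apply Rabs_def2 in H. lra.
Qed.

Lemma ext_ge eta d F K : (forall x, -d < eta x) -> cont_on2 (domc eta d) F ->
  (forall x y, dom eta d x y -> K <= F x y) -> forall x y, domc eta d x y -> K <= F x y.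
Proof.
  intros he hF hO x y hD.
  assert (H := ext_le eta d (fun x y => - F x y) (- K) he (cont2_opp _ _ hF)).
  simpl in H. assert (- F x y <= - K); [apply H; auto; intros; specialize (hO x0 y0 H0); lra | lra].
Qed.

Lemma ext_eq eta d F K : (forall x, -d < eta x) -> cont_on2 (domc eta d) F ->
  (forall x y, dom eta d x y -> F x y = K) -> forall x y, domc eta d x y -> F x y = K.
Proof.
  intros he hF hO x y hD. apply Rle_antisym.
  - apply (ext_le eta d F K he hF); auto; intros; rewrite hO; auto; lra.
  - apply (ext_ge eta d F K he hF); auto; intros; rewrite hO; auto; lra.
Qed.

Lemma cont1_sub (S S' : R -> Prop) f : (forall s, S' s -> S s) -> cont_on1 S f -> cont_on1 S' f.
Proof.
  intros hs hc s h eps he. destruct (hc s (hs s h) eps he) as [del [hd H]].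
  exists del; split; auto.
Qed.

Lemma cont2_vert S F x0 a b : (forall s, a<=s<=b -> S x0 s) -> cont_on2 S F ->
  cont_on1 (fun s => a<=s<=b) (fun s => F x0 s).
Proof.
  intros hs hc s h eps he. destruct (hc x0 s (hs s h) eps he) as [del [hd H]].
  exists del; split; auto. intros t ht hts. apply H; auto.
  replace (x0 - x0) with 0 by ring; rewrite Rabs_R0; auto.
Qed.

Lemma cont2_horiz S F y0 a b : (forall t, a<=t<=b -> S t y0) -> cont_on2 S F ->
  cont_on1 (fun t => a<=t<=b) (fun t => F t y0).
Proof.
  intros hs hc s h eps he. destruct (hc s y0 (hs s h) eps he) as [del [hd H]].
  exists del; split; auto. intros t ht hts. apply H; auto.
  replace (y0 - y0) with 0 by ring; rewrite Rabs_R0; auto.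
Qed.

Lemma dec_lemma (phi : R -> R) a b : a < b -> cont_on1 (fun s => a <= s <= b) phi ->
  (forall s, a < s < b -> ex_derive phi s /\ Derive phi s < 0) ->
  forall s, a < s < b -> phi b < phi s < phi a.
Proof.
  intros hab hc hd s hs. split.
  - destruct (MVT1 phi s b) as [c [hc1 hc2]]; try lra.
    + intros t ht; apply hd; lra.
    + eapply cont1_sub; [|exact hc]; simpl; intros; lra.
    + destruct (hd c) as [_ h]; [lra|]. nra.
  - destruct (MVT1 phi a s) as [c [hc1 hc2]]; try lra.
    + intros t ht; apply hd; lra.
    + eapply cont1_sub; [|exact hc]; simpl; intros; lra.
    + destruct (hd c) as [_ h]; [lra|]. nra.
Qed.

Lemma psi_bounds eta d (u psi : R -> R -> R) m :
  cont_on2 (domc eta d) psi ->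
  (forall x y, dom eta d x y -> is_derive (fun t => psi x t) y (u x y)) ->
  (forall x y, dom eta d x y -> u x y < 0) ->
  (forall x, psi x (eta x) = 0 /\ psi x (- d) = m) ->
  forall x y, dom eta d x y -> 0 < psi x y < m.
Proof.
  intros hc hd hu hb x y hO.
  destruct (hb x) as [h1 h2]. unfold dom in hO.
  assert (hc1 : cont_on1 (fun s => -d <= s <= eta x) (fun t => psi x t)).
  { apply (cont2_vert (domc eta d)); auto. }
  assert (hd1 : forall s, -d < s < eta x -> ex_derive (fun t => psi x t) s /\ Derive (fun t => psi x t) s < 0).
  { intros s hs. assert (hO' : dom eta d x s) by (unfold dom; lra).
    split; [eexists; apply hd; auto|]. erewrite is_derive_unique by (apply hd; auto). apply hu; auto. }
  assert (H := dec_lemma (fun t => psi x t) (-d) (eta x) ltac:(lra) hc1 hd1 y ltac:(lra)).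
  cbv beta in H. rewrite h1, h2 in H. exact H.
Qed.

Ltac ul := unfold dom, domc in *; repeat match goal with | x := _ |- _ => subst x end; lra.

Lemma abs4 a b c e : Rabs (a + b + c + e) <= Rabs a + Rabs b + Rabs c + Rabs e.
Proof.
  eapply Rle_trans; [apply Rabs_triang|].
  assert (Rabs (a + b + c) <= Rabs a + Rabs b + Rabs c).
  { eapply Rle_trans; [apply Rabs_triang|]. assert (H := Rabs_triang a b). lra. }
  lra.
Qed.

Lemma div_bound q hh s e : hh <> 0 -> Rabs (q / hh - s) < e -> Rabs (q - s * hh) <= e * Rabs hh.
Proof.
  intros h1 h2. replace (q - s * hh) with (hh * (q / hh - s)) by (field; auto).
  rewrite Rabs_mult. rewrite Rmult_comm. apply Rmult_le_compat_r; [apply Rabs_pos| lra].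
Qed.

Lemma ex_py eta d F Fy x y : dom eta d x y ->
  (forall x y, dom eta d x y -> ex_derive (fun t => F t y) x /\ ex_derive (fun t => F x t) y) ->
  (forall x y, dom eta d x y -> Fy x y = py F x y) -> Derive (fun t => F x t) y = Fy x y.
Proof. intros h _ he. rewrite he; auto. Qed.

Lemma chain_surface eta d (F Fx Fy : R -> R -> R) x1 s :
  (forall x, -d < eta x) ->
  derivable_pt_lim eta x1 s ->
  cont_on2 (domc eta d) F -> cont_on2 (domc eta d) Fx -> cont_on2 (domc eta d) Fy ->
  (forall x y, dom eta d x y -> ex_derive (fun t => F t y) x /\ ex_derive (fun t => F x t) y) ->
  (forall x y, dom eta d x y -> Fx x y = px F x y /\ Fy x y = py F x y) ->
  derivable_pt_lim (fun x => F x (eta x)) x1 (Fx x1 (eta x1) + s * Fy x1 (eta x1)).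
Proof.
  intros heta hder hF hFx hFy hd he eps heps.
  set (e1 := eta x1).
  set (K := Rabs s + 2).
  assert (hK : 2 <= K) by (unfold K; assert (H := Rabs_pos s); lra).
  set (A := Rabs (Fy x1 e1)).
  assert (hA : 0 <= A) by apply Rabs_pos.
  set (ep1 := eps / (4 * (Rabs s + 2 * K + 2))).
  assert (hep1 : 0 < ep1 /\ ep1 * (Rabs s + 2 * K + 2) = eps / 4).
  { assert (H := Rabs_pos s). unfold ep1; split; [apply Rdiv_lt_0_compat; lra| field; lra]. }
  set (ep2 := Rmin 1 (eps / (2 * (A + 1)))).
  assert (hep2a : 0 < ep2) by (unfold ep2; apply Rmin_glb_lt; [lra|apply Rdiv_lt_0_compat; lra]).
  assert (hep2b : ep2 <= eps / (2 * (A + 1))) by apply Rmin_r.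
  assert (hep2 : 0 < ep2 /\ ep2 <= 1 /\ ep2 * A <= eps / 2).
  { split; [auto|]. split; [apply Rmin_l|].
    apply Rle_trans with (eps / (2 * (A + 1)) * (A + 1)).
    - apply Rle_trans with (ep2 * (A + 1)); [nra|].
      apply Rmult_le_compat_r; lra.
    - right; field; lra. }
  assert (hp : domc eta d x1 e1) by (unfold domc, e1; specialize (heta x1); lra).
  destruct (hFx x1 e1 hp ep1) as [dx [hdx Hx]]; [lra|].
  destruct (hFy x1 e1 hp ep1) as [dy [hdy Hy]]; [lra|].
  destruct (hder ep2 (proj1 hep2)) as [d2 Hd2].
  set (d1 := Rmin dx dy).
  assert (hd1 : 0 < d1) by (apply Rmin_glb_lt; auto).
  set (W := e1 + d).
  assert (hW : 0 < W) by (unfold W, e1; specialize (heta x1); lra).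
  set (del := Rmin d2 (Rmin (d1 / K) (W / K))).
  assert (hdel : 0 < del).
  { destruct d2; unfold del; simpl. apply Rmin_glb_lt; auto.
    apply Rmin_glb_lt; apply Rdiv_lt_0_compat; lra. }
  exists (mkposreal del hdel). simpl. intros h hh0 hhd.
  assert (hah : 0 < Rabs h) by (apply Rabs_pos_lt; auto).
  assert (hhd2 : Rabs h < d2) by (eapply Rlt_le_trans; [exact hhd| apply Rmin_l]).
  assert (hhd1 : K * Rabs h < d1).
  { assert (Rabs h < d1 / K) by (eapply Rlt_le_trans; [exact hhd|];
      eapply Rle_trans; [apply Rmin_r| apply Rmin_l]).
    apply Rmult_lt_reg_r with (/ K); [apply Rinv_0_lt_compat; lra|].
    replace (K * Rabs h * / K) with (Rabs h) by (field; lra). auto. }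
  assert (hhW : K * Rabs h < W).
  { assert (Rabs h < W / K) by (eapply Rlt_le_trans; [exact hhd|];
      eapply Rle_trans; [apply Rmin_r| apply Rmin_r]).
    apply Rmult_lt_reg_r with (/ K); [apply Rinv_0_lt_compat; lra|].
    replace (K * Rabs h * / K) with (Rabs h) by (field; lra). auto. }
  set (k := K * Rabs h).
  assert (hk : 0 < k) by (unfold k; nra).
  assert (hdx1 : k < dx) by (eapply Rlt_le_trans; [exact hhd1| apply Rmin_l]).
  assert (hdy1 : k < dy) by (eapply Rlt_le_trans; [exact hhd1| apply Rmin_r]).
  assert (hh_k : Rabs h <= k) by (unfold k; nra).
  assert (heb : forall t, Rabs (t - x1) <= Rabs h -> Rabs (eta t - e1 - s * (t - x1)) <= ep2 * Rabs (t - x1)).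
  { intros t ht. destruct (Req_dec t x1) as [->|hne].
    - replace (eta x1 - e1 - s * (x1 - x1)) with 0 by (unfold e1; ring).
      rewrite Rabs_R0. assert (H := Rabs_pos (x1 - x1)). nra.
    - apply div_bound; [lra|].
      assert (H := Hd2 (t - x1) ltac:(lra) ltac:(lra)).
      replace (x1 + (t - x1)) with t in H by ring. exact H. }
  assert (heb2 : forall t, Rabs (t - x1) <= Rabs h -> e1 - k < eta t /\ Rabs (eta t - e1) < k).
  { intros t ht. specialize (heb t ht).
    assert (H1 : Rabs (eta t - e1) <= (Rabs s + 1) * Rabs (t - x1)).
    { replace (eta t - e1) with ((eta t - e1 - s * (t - x1)) + s * (t - x1)) by ring.
      eapply Rle_trans; [apply Rabs_triang|]. rewrite Rabs_mult.
      assert (H := Rabs_pos (t - x1)). assert (H' := Rabs_pos s). nra. }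
    assert (H2 : (Rabs s + 1) * Rabs (t - x1) < k).
    { unfold k, K. assert (H := Rabs_pos (t - x1)). assert (H' := Rabs_pos s). nra. }
    split; [apply Rabs_def2 in H1 || idtac|]; try lra.
    assert (H3 := Rabs_def2 _ _ (Rle_lt_trans _ _ _ H1 H2)). lra. }
  set (y0 := e1 - k).
  assert (hy0 : -d < y0) by (unfold y0, k, W in *; lra).
  assert (hx1h : Rabs (x1 + h - x1) <= Rabs h) by (replace (x1 + h - x1) with h by ring; lra).
  destruct (heb2 (x1 + h) hx1h) as [hup hdeta].
  set (e3 := eta (x1 + h)).
  destruct (MVT1 (fun y => F x1 y) y0 e1) as [c1 [hc1 Hc1]].
  { unfold y0; lra. }
  { intros t ht. refine (proj2 (hd x1 t _)). ul. }
  { apply (cont2_vert (domc eta d)); auto. intros t ht; ul. }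
  rewrite (ex_py eta d F Fy x1 c1) in Hc1; [|ul|auto|intros; apply he; auto].
  destruct (MVT1 (fun y => F (x1 + h) y) y0 e3) as [c3 [hc3 Hc3]].
  { ul. }
  { intros t ht. refine (proj2 (hd (x1 + h) t _)). ul. }
  { apply (cont2_vert (domc eta d)); auto. intros t ht; ul. }
  rewrite (ex_py eta d F Fy (x1 + h) c3) in Hc3; [|ul|auto|intros; apply he; auto].
  assert (hhor : exists c2, Rabs (c2 - x1) < Rabs h /\ F (x1 + h) y0 - F x1 y0 = Fx c2 y0 * h).
  { assert (hO : forall t, Rabs (t - x1) <= Rabs h -> dom eta d t y0).
    { intros t ht. destruct (heb2 t ht). ul. }
    destruct (Rlt_le_dec 0 h) as [hpos|hneg].
    - destruct (MVT1 (fun t => F t y0) x1 (x1 + h)) as [c2 [hc2 Hc2]]; [lra| | |].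
      + intros t ht. refine (proj1 (hd t y0 _)). apply hO. rewrite Rabs_right, Rabs_right; lra.
      + apply (cont2_horiz (domc eta d)); auto. intros t ht.
        assert (H := hO t ltac:(rewrite Rabs_right, (Rabs_right h); lra)). unfold dom, domc in *; lra.
      + exists c2. split; [rewrite Rabs_right, (Rabs_right h); lra|].
        destruct (he c2 y0) as [E _]; [apply hO; rewrite Rabs_right, (Rabs_right h); lra|].
        rewrite E. unfold px. rewrite Hc2. ring.
    - assert (hneg' : h < 0) by lra.
      destruct (MVT1 (fun t => F t y0) (x1 + h) x1) as [c2 [hc2 Hc2]]; [lra| | |].
      + intros t ht. refine (proj1 (hd t y0 _)). apply hO. rewrite Rabs_left, (Rabs_left h); lra.
      + apply (cont2_horiz (domc eta d)); auto. intros t ht.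
        destruct (Req_dec t x1) as [->|hne].
        * ul.
        * assert (H := hO t ltac:(rewrite Rabs_left1, (Rabs_left h); lra)). unfold dom, domc in *; lra.
      + exists c2. split; [rewrite Rabs_left, (Rabs_left h); lra|].
        destruct (he c2 y0) as [E _]; [apply hO; rewrite Rabs_left, (Rabs_left h); lra|].
        rewrite E. unfold px. replace (F (x1 + h) y0 - F x1 y0) with (- (F x1 y0 - F (x1 + h) y0)) by ring.
        rewrite Hc2. ring. }
  destruct hhor as [c2 [hc2 Hc2]].
  assert (E1 : Rabs (Fy x1 c1 - Fy x1 e1) < ep1).
  { apply Hy; [ul| |].
    - replace (x1 - x1) with 0 by ring; rewrite Rabs_R0; lra.
    - rewrite Rabs_left1; unfold y0 in *; lra. }
  assert (E3 : Rabs (Fy (x1 + h) c3 - Fy x1 e1) < ep1).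
  { apply Hy; [ul| |].
    - replace (x1 + h - x1) with h by ring; lra.
    - apply Rabs_def2 in hdeta. apply Rabs_def1; unfold y0, e3 in *; lra. }
  assert (E2 : Rabs (Fx c2 y0 - Fx x1 e1) < ep1).
  { apply Hx; [| |].
    - assert (H := heb2 c2 ltac:(lra)). unfold domc, y0 in *; lra.
    - lra.
    - unfold y0. replace (e1 - k - e1) with (- k) by ring. rewrite Rabs_Ropp, Rabs_right; lra. }
  set (G1 := Fy x1 c1) in *. set (G3 := Fy (x1 + h) c3) in *. set (X2 := Fx c2 y0) in *.
  fold e1. fold e3.
  assert (Hsum : F (x1 + h) e3 - F x1 e1 = G3 * (e3 - y0) + X2 * h - G1 * (e1 - y0)).
  { cbv beta in Hc1, Hc3. rewrite <- Hc1, <- Hc2, <- Hc3. ring. }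
  assert (Hq : (F (x1 + h) e3 - F x1 e1) / h - (Fx x1 e1 + s * Fy x1 e1) =
     ((e3 - e1) / h - s) * G3 + s * (G3 - Fy x1 e1) + (k / h) * (G3 - G1) + (X2 - Fx x1 e1)).
  { rewrite Hsum. unfold y0. field. auto. }
  rewrite Hq. eapply Rle_lt_trans; [apply abs4|]. rewrite !Rabs_mult.
  assert (Hk : Rabs (k / h) = K).
  { unfold Rdiv. rewrite Rabs_mult, Rabs_inv. unfold k. rewrite Rabs_mult.
    rewrite (Rabs_right K) by lra. rewrite Rabs_Rabsolu. field. lra. }
  rewrite Hk.
  assert (Hd : Rabs ((e3 - e1) / h - s) < ep2).
  { unfold e3. replace (x1 + h) with (x1 + h) by ring. apply Hd2; auto. }
  assert (HG3 : Rabs G3 <= A + ep1).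
  { replace G3 with (Fy x1 e1 + (G3 - Fy x1 e1)) by ring. eapply Rle_trans; [apply Rabs_triang|].
    unfold A; lra. }
  assert (HG31 : Rabs (G3 - G1) < 2 * ep1).
  { replace (G3 - G1) with ((G3 - Fy x1 e1) - (G1 - Fy x1 e1)) by ring.
    eapply Rle_lt_trans; [apply Rabs_triang|]. rewrite Rabs_Ropp. fold G1 in E1. fold G3 in E3. lra. }
  assert (T1 : Rabs ((e3 - e1) / h - s) * Rabs G3 <= ep2 * A + ep1).
  { apply Rle_trans with (ep2 * (A + ep1)).
    - apply Rmult_le_compat; try apply Rabs_pos; lra.
    - nra. }
  assert (T2 : Rabs s * Rabs (G3 - Fy x1 e1) <= Rabs s * ep1).
  { apply Rmult_le_compat_l; [apply Rabs_pos| fold G3 in E3; lra]. }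
  assert (T3 : K * Rabs (G3 - G1) <= K * (2 * ep1)).
  { apply Rmult_le_compat_l; lra. }
  fold X2 in E2.
  nra.
Qed.

Lemma Ck3_basic (D' Dc : R -> R -> Prop) F : Ck_cl 3 D' Dc F ->
  cont_on2 Dc F /\
  (forall x y, D' x y -> ex_derive (fun t => F t y) x /\ ex_derive (fun t => F x t) y) /\
  exists Fx Fy, (forall x y, D' x y -> Fx x y = px F x y /\ Fy x y = py F x y) /\
    cont_on2 Dc Fx /\ cont_on2 Dc Fy.
Proof.
  simpl. intros [h1 [h2 [Fx [Fy [h3 [[h4 _] [h5 _]]]]]]].
  split; auto. split; auto. exists Fx, Fy. auto.
Qed.

Lemma evt_A eta d L F : 0 < L -> (forall x, -d < eta x) -> (forall x, continuity_pt eta x) ->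
  cont_on2 (domc eta d) F ->
  exists x0 y0, 0 <= x0 <= L /\ domc eta d x0 y0 /\
    forall x y, 0 <= x <= L -> domc eta d x y -> F x y <= F x0 y0.
Proof.
  intros hL heta hec hF.
  set (H := fun x t => F x (- d + t * (eta x + d))).
  destruct (EVTm.evt_rect 0 L 0 1 H) as [x0 [t0 [hx0 [ht0 hM]]]]; try lra.
  - intros x t hx ht eps heps.
    assert (hW := heta x).
    assert (hD : domc eta d x (- d + t * (eta x + d))) by (unfold domc; nra).
    destruct (hF x _ hD eps heps) as [dF [hdF HF]].
    assert (hc := hec x). unfold continuity_pt, continue_in, limit1_in, limit_in in hc.
    simpl in hc. unfold R_dist in hc.
    destruct (hc (dF / 2)) as [de [hde Hde]]; [lra|].
    set (W := eta x + d).
    set (del := Rmin de (Rmin dF (dF / (2 * (W + 1))))).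
    assert (hdel : 0 < del).
    { unfold del. apply Rmin_glb_lt; auto. apply Rmin_glb_lt; auto.
      apply Rdiv_lt_0_compat; unfold W; lra. }
    exists del; split; auto.
    intros x' t' hx' ht' h1 h2. unfold H. apply HF.
    + specialize (heta x'). unfold domc; nra.
    + eapply Rlt_le_trans; [exact h1|]. unfold del.
      eapply Rle_trans; [apply Rmin_r| apply Rmin_l].
    + assert (hx'x : Rabs (x' - x) < de) by (eapply Rlt_le_trans; [exact h1| apply Rmin_l]).
      assert (he' : Rabs (eta x' - eta x) < dF / 2).
      { destruct (Req_dec x' x) as [->|hne].
        - unfold Rminus; rewrite Rplus_opp_r, Rabs_R0; lra.
        - apply Hde. split; auto. unfold D_x, no_cond; auto. }
      assert (ht2 : Rabs (t' - t) < dF / (2 * (W + 1))).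
      { eapply Rlt_le_trans; [exact h2|]. unfold del.
        eapply Rle_trans; [apply Rmin_r| apply Rmin_r]. }
      replace (- d + t' * (eta x' + d) - (- d + t * (eta x + d)))
        with (t' * (eta x' - eta x) + (t' - t) * W) by (unfold W; ring).
      eapply Rle_lt_trans; [apply Rabs_triang|]. rewrite !Rabs_mult.
      rewrite (Rabs_right W) by (unfold W; lra).
      assert (Rabs t' <= 1) by (rewrite Rabs_right; lra).
      assert (Rabs t' * Rabs (eta x' - eta x) <= Rabs (eta x' - eta x)).
      { assert (Hq0 := Rabs_pos (eta x' - eta x)). nra. }
      assert (Rabs (t' - t) * W <= dF / 2).
      { apply Rle_trans with (dF / (2 * (W + 1)) * W).
        - apply Rmult_le_compat_r; [unfold W; lra| lra].
        - apply Rle_trans with (dF / (2 * (W + 1)) * (W + 1)).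
          + apply Rmult_le_compat_l; [apply Rlt_le, Rdiv_lt_0_compat; unfold W; lra| lra].
          + right. field. unfold W; lra. }
      lra.
  - exists x0, (- d + t0 * (eta x0 + d)). split; auto. split.
    + specialize (heta x0). unfold domc; nra.
    + intros x y hx hy. unfold domc in hy.
      assert (hW := heta x).
      set (t := (y + d) / (eta x + d)).
      assert (ht : 0 <= t <= 1).
      { unfold t. split.
        - apply Rdiv_le_0_compat; lra.
        - apply Rmult_le_reg_r with (eta x + d); [lra|]. unfold Rdiv. rewrite Rmult_assoc, Rinv_l; lra. }
      specialize (hM x t hx ht). unfold H in hM.
      replace (- d + t * (eta x + d)) with y in hM; auto.
      unfold t. field. lra.
Qed.

Lemma ratio_lt1 a b : b < 0 -> 0 <= a -> a + b < 0 -> Rabs (a / b) < 1.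
Proof.
  intros hb ha hab.
  replace (a / b) with (- (a / - b)) by (field; lra).
  rewrite Rabs_Ropp, Rabs_right.
  - apply Rmult_lt_reg_r with (- b); [lra|]. unfold Rdiv. rewrite Rmult_assoc, Rinv_l; lra.
  - apply Rle_ge, Rdiv_le_0_compat; lra.
Qed.

Lemma reduce eta d L (h : R -> R -> R) : 0 < L -> (forall x, eta (x + 2*L) = eta x) ->
  (forall x, eta (-x) = eta x) ->
  (forall x y, domc eta d x y -> h (x + 2*L) y = h x y) ->
  (forall x y, domc eta d x y -> h (-x) y = h x y) ->
  forall M, (forall x y, 0 <= x <= L -> domc eta d x y -> h x y <= M) ->
  forall x y, domc eta d x y -> h x y <= M.
Proof.
  intros hL hp he hhp hhs M hM.
  assert (claim : forall n, forall x y, Rabs x <= (2 * INR n + 1) * L -> domc eta d x y -> h x y <= M).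
  { induction n as [|n IH]; intros x y hx hD.
    - simpl in hx. destruct (Rle_lt_dec 0 x) as [hpos|hneg].
      + apply hM; auto. rewrite Rabs_right in hx; lra.
      + rewrite Rabs_left in hx by lra.
        assert (hD' : domc eta d (- x) y) by (unfold domc in *; rewrite he; auto).
        rewrite <- (hhs x y hD). apply hM; auto. lra.
    - rewrite S_INR in hx.
      destruct (Rle_lt_dec (Rabs x) ((2 * INR n + 1) * L)) as [hle|hgt]; [apply IH; auto|].
      assert (hn := pos_INR n).
      destruct (Rle_lt_dec 0 x) as [hpos|hneg].
      + rewrite Rabs_right in hx, hgt by lra.
        set (x' := x - 2 * L).
        assert (hxx : x = x' + 2 * L) by (unfold x'; ring).
        assert (hD' : domc eta d x' y) by (unfold domc in *; rewrite <- hp, <- hxx; auto).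
        rewrite hxx, hhp; auto. apply IH; auto.
        destruct (Rle_lt_dec 0 x'); [rewrite Rabs_right|rewrite Rabs_left]; unfold x' in *; nra.
      + rewrite Rabs_left in hx, hgt by lra.
        set (x' := x + 2 * L).
        assert (hD' : domc eta d x' y) by (unfold domc in *; unfold x'; rewrite hp; auto).
        rewrite <- (hhp x y hD). apply IH; auto. fold x'.
        destruct (Rle_lt_dec 0 x'); [rewrite Rabs_right|rewrite Rabs_left]; unfold x' in *; nra. }
  intros x y hD.
  destruct (INR_unbounded (Rabs x / L)) as [n hn].
  apply (claim n); auto.
  assert (hn' := pos_INR n).
  assert (Rabs x < INR n * L).
  { apply Rmult_lt_reg_r with (/ L); [apply Rinv_0_lt_compat; lra|].
    replace (INR n * L * / L) with (INR n) by (field; lra). unfold Rdiv in hn. lra. }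
  nra.
Qed.

Lemma alg u0 v0 a b Vx Vy Px Py s g : 0 < g -> u0 < 0 -> a < 0 -> Vx - b <= 0 ->
  v0 = s * u0 -> a + Vy = 0 -> u0 * a + v0 * b + Px = 0 ->
  u0 * Vx + v0 * Vy + Py + g = 0 -> Px + s * Py = 0 ->
  a + s * b + (Vx + s * Vy) = 0 -> 0 <= u0 + v0 -> False.
Proof.
  intros hg hu ha hgam hv hI hE1 hE2 hB hT hf.
  set (gm := Vx - b).
  assert (hs : 1 + s <= 0).
  { subst v0. assert (u0 * (1 + s) >= 0) by lra. nra. }
  assert (hT' : a * (1 - s) + b * (1 + s) + gm = 0) by (unfold gm; subst; nra).
  set (E := a * (1 - s * s) + 2 * s * b + s * gm).
  assert (hE : u0 * E + s * g = 0).
  { unfold E, gm. subst v0. assert (Vy = - a) by lra. subst Vy.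
    assert (Px = - s * Py) by lra. subst Px. nra. }
  assert (hEneg : E < 0).
  { assert (s * g < 0) by nra. nra. }
  assert (hid : E * (1 + s) = a * (1 - s) * (1 + s * s) + gm * s * (s - 1)).
  { unfold E. assert (b * (1 + s) = - gm - a * (1 - s)) by lra.
    replace (2 * s * b * (1 + s)) with (2 * s * (b * (1 + s))) by ring. nra. }
  assert (h1 : a * (1 - s) * (1 + s * s) < 0).
  { assert (0 < (1 - s) * (1 + s * s)) by nra. nra. }
  assert (h2 : gm * s * (s - 1) <= 0).
  { assert (0 < s * (s - 1)) by nra. unfold gm in *. nra. }
  nra.
Qed.

Lemma deriv_lim (f : R -> R) x : ex_derive f x -> derivable_pt_lim f x (Derive f x).
Proof. intros h. apply is_derive_Reals. apply Derive_correct. auto. Qed.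

Lemma eta_near (eta : R -> R) x y : continuity_pt eta x -> y < eta x ->
  exists del, 0 < del /\ forall t, Rabs (t - x) < del -> y < eta t.
Proof.
  intros hc hy. unfold continuity_pt, continue_in, limit1_in, limit_in in hc. simpl in hc.
  unfold R_dist in hc. destruct (hc (eta x - y)) as [del [hdel H]]; [lra|].
  exists del; split; auto. intros t ht. destruct (Req_dec t x) as [->|hne]; [lra|].
  assert (H' := H t (conj (conj I (not_eq_sym hne)) ht)). apply Rabs_def2 in H'. lra.
Qed.

Theorem lemma2p3 (g L Patm : R) (u v P : R -> R -> R) (eta : R -> R) (d : R) :
  0 < g -> 0 < L ->
  in_W g L Patm u v P eta d ->
  (exists ux : R -> R -> R,
     cont_on2 (domc eta d) ux /\
     (forall x y, dom eta d x y -> ux x y = px u x y) /\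
     (forall x y, 0 < x < L -> -d < y <= eta x -> ux x y < 0)) ->
  exists x0 y0, domc eta d x0 y0 /\
    Rabs (v x0 y0 / u x0 y0) < 1 /\
    (forall x y, domc eta d x y -> Rabs (v x y / u x y) <= Rabs (v x0 y0 / u x0 y0)).
Proof.
  intros hg hL [hw hmt] [ux [hux1 [hux2 hux3]]].
  destruct hw as [hd [heta [hCk [hper [_ [hev [hu [hv [hP [hperD [hsym [heul [hsurf [hbot [hcc hpsiall]]]]]]]]]]]]]]].
  destruct hcc as [c [hc huc]].
  destruct hpsiall as [psi [m [gam [hm [hpsi [hpsid [hpsib [_ [hvort hgam]]]]]]]]].
  destruct (Ck3_basic _ _ _ hu) as [hcu [hdu [Ux' [Uy [heu [_ hcUy]]]]]].
  destruct (Ck3_basic _ _ _ hv) as [hcv [hdv [Vx [Vy [hev' [hcVx hcVy]]]]]].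
  destruct (Ck3_basic _ _ _ hP) as [hcP [hdP [Px_ [Py_ [heP [hcPx hcPy]]]]]].
  assert (hetac : forall x, continuity_pt eta x).
  { intros x. apply continuity_pt_filterlim. destruct (hCk 0%nat ltac:(lia) x) as [_ H]. exact H. }
  assert (hetad : forall x, derivable_pt_lim eta x (Derive eta x)).
  { intros x. apply deriv_lim. destruct (hCk 1%nat ltac:(lia) x) as [H _]. exact H. }
  assert (huD : forall x y, domc eta d x y -> u x y <= c).
  { apply ext_le; auto. }
  assert (hvsym0 : forall y, domc eta d 0 y -> v 0 y = 0).
  { intros y hD. destruct (hsym 0 y hD) as [_ [_ H]]. rewrite Ropp_0 in H. lra. }
  assert (hvsymL : forall y, domc eta d L y -> v L y = 0).
  { intros y hD. assert (hD' : domc eta d (- L) y) by (unfold domc in *; rewrite hev; auto).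
    destruct (hperD (- L) y hD') as [_ [H1 _]]. replace (- L + 2 * L) with L in H1 by ring.
    destruct (hsym L y hD) as [_ [_ H2]]. lra. }
  assert (key : forall x y, 0 <= x <= L -> domc eta d x y -> 0 <= v x y /\ u x y + v x y < 0).
  { destruct hmt as [hmono | htriv].
    2: { intros x y hx hD. destruct htriv as [_ htr].
         assert (hD' : domc eta d (- x) y) by (unfold domc in *; rewrite hev; auto).
         destruct (htr x (- x) y hD hD') as [_ [H1 _]].
         destruct (hsym x y hD) as [_ [_ H2]].
         assert (v x y = 0) by lra. specialize (huD x y hD). lra. }
    assert (hvzero : forall x y, 0 <= x <= L -> domc eta d x y -> (x = 0 \/ x = L \/ y = -d) -> v x y = 0).
    { intros x y hx hD [ -> | [ -> | -> ] ]; auto. }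
    assert (hvnn : forall x y, 0 <= x <= L -> domc eta d x y -> 0 <= v x y).
    { intros x y hx hD.
      destruct (Req_dec x 0) as [e|n1]; [rewrite hvzero; auto; lra|].
      destruct (Req_dec x L) as [e|n2]; [rewrite hvzero; auto; lra|].
      destruct (Req_dec y (-d)) as [e|n3]; [rewrite hvzero; auto; lra|].
      apply Rlt_le, hmono; unfold domc in hD; lra. }
    intros x y hx hD. split; [apply hvnn; auto|].
    destruct (Rlt_le_dec (u x y + v x y) 0) as [ok|bad]; auto. exfalso.
    destruct (evt_A eta d L (fun x y => u x y + v x y) hL heta hetac (cont2_plus _ _ _ hcu hcv))
      as [x1 [y1 [hx1 [hy1 hM1]]]].
    assert (hf1 : 0 <= u x1 y1 + v x1 y1) by (specialize (hM1 x y hx hD); lra).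
    assert (hu1 := huD x1 y1 hy1).
    destruct (Req_dec x1 0) as [e|n1]; [rewrite hvzero in hf1; auto; lra|].
    destruct (Req_dec x1 L) as [e|n2]; [rewrite hvzero in hf1; auto; lra|].
    destruct (Req_dec y1 (-d)) as [e|n3]; [rewrite hvzero in hf1; auto; lra|].
    assert (hx1' : 0 < x1 < L) by lra.
    assert (hy1' : -d < y1 <= eta x1) by (unfold domc in hy1; lra).
    assert (hux1n := hux3 x1 y1 hx1' hy1').
    assert (hpsiO : forall x y, dom eta d x y -> 0 < psi x y < m).
    { apply (psi_bounds eta d u psi m hpsi).
      - intros x' y' h'; apply (hpsid x' y' h').
      - intros x' y' h'; specialize (huc x' y' h'); lra.
      - auto. }
    destruct (Rlt_le_dec y1 (eta x1)) as [hint|hsf].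
    +
      assert (hO : dom eta d x1 y1) by (unfold dom; lra).
      assert (hdx : derivable_pt_lim (fun t => u t y1 + v t y1) x1 (px u x1 y1 + px v x1 y1)).
      { apply (derivable_pt_lim_plus (fun t => u t y1) (fun t => v t y1)).
        - apply deriv_lim, (hdu x1 y1 hO).
        - apply deriv_lim, (hdv x1 y1 hO). }
      assert (hdy : derivable_pt_lim (fun t => u x1 t + v x1 t) y1 (py u x1 y1 + py v x1 y1)).
      { apply (derivable_pt_lim_plus (fun t => u x1 t) (fun t => v x1 t)).
        - apply deriv_lim, (hdu x1 y1 hO).
        - apply deriv_lim, (hdv x1 y1 hO). }
      assert (h0x : px u x1 y1 + px v x1 y1 = 0).
      { apply (local_max_deriv _ _ _ hdx).
        destruct (eta_near eta x1 y1 (hetac x1) hint) as [de [hde Hde]].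
        exists (Rmin de (Rmin x1 (L - x1))). split.
        - apply Rmin_glb_lt; auto. apply Rmin_glb_lt; lra.
        - intros t ht. apply (hM1 t y1).
          + assert (Rabs (t - x1) < Rmin x1 (L - x1)) by (eapply Rlt_le_trans; [exact ht| apply Rmin_r]).
            assert (Rmin x1 (L - x1) <= x1) by apply Rmin_l.
            assert (Rmin x1 (L - x1) <= L - x1) by apply Rmin_r.
            apply Rabs_def2 in H. lra.
          + assert (Rabs (t - x1) < de) by (eapply Rlt_le_trans; [exact ht| apply Rmin_l]).
            specialize (Hde t H). unfold domc; lra. }
      assert (h0y : py u x1 y1 + py v x1 y1 = 0).
      { apply (local_max_deriv _ _ _ hdy).
        exists (Rmin (y1 + d) (eta x1 - y1)). split.
        - apply Rmin_glb_lt; lra.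
        - intros t ht. apply (hM1 x1 t); [lra|].
          assert (Rmin (y1 + d) (eta x1 - y1) <= y1 + d) by apply Rmin_l.
          assert (Rmin (y1 + d) (eta x1 - y1) <= eta x1 - y1) by apply Rmin_r.
          apply Rabs_def2 in ht. unfold domc; lra. }
      destruct (heul x1 y1 hO) as [_ [_ hinc]].
      assert (hw := hvort x1 y1 hO).
      destruct (hgam (psi x1 y1) (hpsiO x1 y1 hO)) as [hg0 _].
      rewrite (hux2 x1 y1 hO) in hux1n. lra.
    +
      assert (hy1e : y1 = eta x1) by lra. subst y1.
      set (s := Derive eta x1).
      assert (CRu := chain_surface eta d u ux Uy x1 s heta (hetad x1) hcu hux1 hcUy hdu
                     (fun x y h => conj (hux2 x y h) (proj2 (heu x y h)))).
      assert (CRv := chain_surface eta d v Vx Vy x1 s heta (hetad x1) hcv hcVx hcVy hdv hev').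
      assert (CRP := chain_surface eta d P Px_ Py_ x1 s heta (hetad x1) hcP hcPx hcPy hdP heP).
      assert (hT : ux x1 (eta x1) + s * Uy x1 (eta x1) + (Vx x1 (eta x1) + s * Vy x1 (eta x1)) = 0).
      { apply (local_max_deriv (fun x => u x (eta x) + v x (eta x)) x1).
        - apply (derivable_pt_lim_plus (fun x => u x (eta x)) (fun x => v x (eta x))); auto.
        - exists (Rmin x1 (L - x1)). split; [apply Rmin_glb_lt; lra|].
          intros t ht. apply (hM1 t (eta t)).
          + assert (Rmin x1 (L - x1) <= x1) by apply Rmin_l.
            assert (Rmin x1 (L - x1) <= L - x1) by apply Rmin_r.
            apply Rabs_def2 in ht. lra.
          + specialize (heta t). unfold domc; lra. }
      assert (hB : Px_ x1 (eta x1) + s * Py_ x1 (eta x1) = 0).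
      { apply (uniqueness_limite (fun x => P x (eta x)) x1); auto.
        intros eps heps. exists (mkposreal 1 Rlt_0_1). intros hh _ _.
        rewrite (proj1 (hsurf (x1 + hh))), (proj1 (hsurf x1)).
        unfold Rminus. rewrite !Rplus_opp_r. unfold Rdiv. rewrite Rmult_0_l, Rplus_opp_r, Rabs_R0. lra. }
      assert (hnear : forall x, -d < eta x) by auto.
      assert (hI : forall x y, domc eta d x y -> ux x y + Vy x y = 0).
      { apply (ext_eq eta d (fun x y => ux x y + Vy x y)); auto.
        - apply cont2_plus; auto.
        - intros xx yy hO. rewrite (hux2 xx yy hO), (proj2 (hev' xx yy hO)). apply (heul xx yy hO). }
      assert (hE1 : forall x y, domc eta d x y -> u x y * ux x y + v x y * Uy x y + Px_ x y = 0).
      { apply (ext_eq eta d (fun x y => u x y * ux x y + v x y * Uy x y + Px_ x y)); auto.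
        - repeat apply cont2_plus; auto; apply cont2_mult; auto.
        - intros xx yy hO. rewrite (hux2 xx yy hO), (proj2 (heu xx yy hO)), (proj1 (heP xx yy hO)).
          destruct (heul xx yy hO) as [H _]. lra. }
      assert (hE2 : forall x y, domc eta d x y -> u x y * Vx x y + v x y * Vy x y + Py_ x y = - g).
      { apply (ext_eq eta d (fun x y => u x y * Vx x y + v x y * Vy x y + Py_ x y)); auto.
        - repeat apply cont2_plus; auto; apply cont2_mult; auto.
        - intros xx yy hO. rewrite (proj1 (hev' xx yy hO)), (proj2 (hev' xx yy hO)), (proj2 (heP xx yy hO)).
          destruct (heul xx yy hO) as [_ [H _]]. lra. }
      assert (hW : forall x y, domc eta d x y -> Vx x y + - Uy x y <= 0).
      { apply (ext_le eta d (fun x y => Vx x y + - Uy x y)); auto.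
        - apply cont2_plus; auto. apply cont2_opp; auto.
        - intros xx yy hO. rewrite (proj1 (hev' xx yy hO)), (proj2 (heu xx yy hO)).
          assert (H1 := hvort xx yy hO). destruct (hgam (psi xx yy) (hpsiO xx yy hO)) as [H _]. lra. }
      assert (hp : domc eta d x1 (eta x1)) by (specialize (heta x1); unfold domc; lra).
      apply (alg (u x1 (eta x1)) (v x1 (eta x1)) (ux x1 (eta x1)) (Uy x1 (eta x1))
                 (Vx x1 (eta x1)) (Vy x1 (eta x1)) (Px_ x1 (eta x1)) (Py_ x1 (eta x1)) s g); auto.
      * lra.
      * specialize (hW x1 (eta x1) hp). lra.
      * apply (proj2 (hsurf x1)).
      * specialize (hE2 x1 (eta x1) hp). lra. }
  set (h := fun x y => Rabs (v x y / u x y)).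
  assert (hch : cont_on2 (domc eta d) h).
  { unfold h. apply cont2_abs. apply cont2_mult; auto. apply (cont2_inv _ u c); auto. }
  destruct (evt_A eta d L h hL heta hetac hch) as [x0 [y0 [hx0 [hy0 hM]]]].
  exists x0, y0. split; auto. split.
  - destruct (key x0 y0 hx0 hy0) as [k1 k2]. unfold h. specialize (huD x0 y0 hy0).
    apply ratio_lt1; lra.
  - apply (reduce eta d L h hL hper hev); auto.
    + intros x y hD. unfold h. destruct (hperD x y hD) as [H1 [H2 _]]. rewrite H1, H2; auto.
    + intros x y hD. unfold h. destruct (hsym x y hD) as [H1 [_ H2]]. rewrite H1, H2.
      unfold Rdiv. rewrite Ropp_mult_distr_l_reverse, Rabs_Ropp. auto.
Qed.
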